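(* Let $1\le a\le n$ be integers. The degree of $v_a$ in the graph $\mathcal{L}_{[a,n]}$ (counting the self-loop at $v_a$ once, i.e. the number of integers $b$ with $a\le b\le n$ and $\operatorname{lcm}(a,b)\le n$) is $$d(v_a)=\sum_{1\le j\le \frac{n}{a}}\ \sum_{\substack{1\le \ell\le j\\ \gcd(j,\ell)=1\\ \ell\mid a}} 1.$$
   Context: For integers $k\le n$, $\mathcal{L}_{[k,n]}$ is the graph with vertices $v_k,v_{k+1},\ldots,v_n$ and an edge between $v_i$ and $v_j$ whenever $\operatorname{lcm}(i,j)\le n$; in particular each vertex has a self-loop. *)

(* Defs.v *)
From mathcomp Require Import all_boot.

(* The graph L_[k,n]: vertices v_k..v_n, edge v_i -- v_j iff lcm(i,j) <= n
   (self-loops included). *)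
Definition L_adj (n i j : nat) : bool := lcmn i j <= n.

Definition L_degree (k n i : nat) : nat :=
  #|[pred b : 'I_n.+1 | (k <= b) && L_adj n i b]|.

(* Main.v *)
From mathcomp Require Import all_boot.
From mathcomp Require Import zify.

Lemma sum_eq_uniq (s : seq nat) (P : pred nat) x0 : uniq s ->
  \sum_(x <- s | P x) (x == x0) = ((x0 \in s) && P x0).
Proof.
elim: s => [|x s IH] /=; first by rewrite big_nil.
move=> /andP[xs us]; rewrite big_cons IH // in_cons.
case: (eqVneq x x0) => [<-|ne] /=; first by rewrite (negbTE xs); case: (P x).
by case: (P x).
Qed.

Lemma coprime_gcd_div a b : 0 < a -> coprime (b %/ gcdn a b) (a %/ gcdn a b).
Proof.
move=> a0; set g := gcdn a b.
have g0 : 0 < g by rewrite gcdn_gt0 a0.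
have ea : a = g * (a %/ g) by rewrite mulnC divnK // dvdn_gcdl.
have eb : b = g * (b %/ g) by rewrite mulnC divnK // dvdn_gcdr.
rewrite /coprime gcdnC; apply/eqP.
have : g * gcdn (a %/ g) (b %/ g) = g * 1.
  by rewrite muln_gcdr -ea -eb muln1.
by move/eqP; rewrite eqn_pmul2l // => /eqP.
Qed.

Lemma key a b j l : 0 < a -> 0 < l -> l %| a -> coprime j l ->
  (b == a %/ l * j) = (l == a %/ gcdn a b) && (j == b %/ gcdn a b).
Proof.
move=> a0 l0 la cjl.
have g0 : 0 < gcdn a b by rewrite gcdn_gt0 a0.
apply/eqP/andP.
- move=> ->.
  have ea : a = a %/ l * l by rewrite divnK.
  have al0 : 0 < a %/ l by rewrite divn_gt0 // dvdn_leq.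
  have -> : gcdn a (a %/ l * j) = a %/ l.
    by rewrite {1}ea -muln_gcdr gcdnC (eqP cjl) muln1.
  split; apply/eqP; last by rewrite mulKn.
  by rewrite divnA // mulKn.
- move=> [/eqP -> /eqP ->].
  by rewrite divnA ?dvdn_gcdl // mulKn // mulnC divnK // dvdn_gcdr.
Qed.

Require Import Defs.

Theorem proposition3p1 (a n : nat) :
  1 <= a -> a <= n ->
  L_degree a n a =
  \sum_(1 <= j < (n %/ a).+1)
     \sum_(1 <= l < j.+1 | coprime j l && (l %| a)) 1.
Proof.
move=> a0 an.
have -> : L_degree a n a = \sum_(i < n.+1) ((a <= i) && L_adj n a i).
  by rewrite /L_degree -sum1_card big_mkcond; apply: eq_bigr => i _; rewrite inE; case: (_ && _).
rewrite -(big_mkord (fun _ => true) (fun b => nat_of_bool ((a <= b) && L_adj n a b))).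
rewrite (eq_bigr (fun b => \sum_(1 <= j < (n %/ a).+1)
     \sum_(1 <= l < j.+1 | coprime j l && (l %| a)) (b == a %/ l * j))); last first.
  move=> b _.
  set g := gcdn a b.
  have g0 : 0 < g by rewrite gcdn_gt0 a0.
  set l0 := a %/ g; set j0 := b %/ g.
  transitivity (\sum_(1 <= j < (n %/ a).+1) (j == j0) *
       ((l0 \in index_iota 1 j0.+1) && (coprime j0 l0 && (l0 %| a)))); last first.
    apply: eq_bigr => j _.
    have lpos : forall l, l %| a -> 0 < l.
      by case=> [|l] //; rewrite dvd0n => /eqP a00; rewrite a00 in a0.
    case: (eqVneq j j0) => [->|ne].
      rewrite mul1n -(sum_eq_uniq _ (fun l => coprime j0 l && (l %| a))) ?iota_uniq //.
      by apply: eq_bigr => l /andP[cjl la]; rewrite key ?lpos // eqxx andbT.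
    rewrite mul0n big1 // => l /andP[cjl la].
    by rewrite key ?lpos // (negbTE ne) andbF.
  rewrite -big_distrl /= sum_eq_uniq ?iota_uniq // andbT !mem_index_iota.
  have ea : a = g * l0 by rewrite /l0 mulnC divnK // dvdn_gcdl.
  have eb : b = g * j0 by rewrite /j0 mulnC divnK // dvdn_gcdr.
  have cop : coprime j0 l0 by exact: coprime_gcd_div.
  have l0a : l0 %| a by rewrite {1}ea dvdn_mull.
  rewrite cop l0a andbT /L_adj.
  rewrite mulnb andbT.
  have -> : lcmn a b = j0 * a by rewrite /lcmn -muln_divA ?dvdn_gcdr // mulnC.
  have -> : (a <= b) = (l0 <= j0) by rewrite ea eb leq_pmul2l.
  have l0p : 0 < l0 by rewrite /l0 divn_gt0 // dvdn_leq // dvdn_gcdl.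
  rewrite !ltnS leq_divRL // l0p /=.
  case: (leqP l0 j0) => h /=; last by rewrite !andbF.
  have -> : 0 < j0 by apply: leq_trans h.
  by rewrite /= andbT.
rewrite exchange_big_nat; apply: eq_big_nat => j /andP[j1 jn].
rewrite exchange_big_nat; apply: eq_bigr => l /andP[cjl la].
rewrite (sum_eq_uniq _ xpredT) ?iota_uniq // andbT mem_index_iota /= ltnS.
rewrite ltnS leq_divRL // in jn.
suff -> : a %/ l * j <= n by [].
by apply: leq_trans jn; rewrite mulnC leq_mul2l leq_div orbT.
Qed.
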